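(* Let $p\in\mathbb{N}^*$ and $\gamma\geq1$. Let $V$ be a subset of a normed vector space and let $F:\mathbb{R}^p\to V$ be a homeomorphism which is Lip-$\gamma$. Endow $V$ with the $F$-induced atlas $(F(B_p(x,1)),\phi_x\circ F^{-1})_{x\in I}$. Then the inverses of the chart maps, i.e. the maps $(\phi_x\circ F^{-1}|_{F(B_p(x,1))})^{-1}:B_p(0,1)\to V$, $x\in I$, are Lip-$\gamma$ in the classical sense, with Lip-$\gamma$ norms bounded uniformly in $x\in I$.
   Context: Lip-$\gamma$ (Stein sense): for $m$ the integer with $0<\gamma-m\le1$, a map $g$ on an open set is Lip-$\gamma$ with norm $\le M$ if it is $m$ times differentiable, $\|D^kg(x)(v)\|\le M\|v\|$ and the Taylor remainders $R_k(x,y)$ defined by $D^kg(x)(v)=\sum_{j=k}^m D^jg(y)\big(\frac{v\otimes(x-y)^{\otimes(j-k)}}{(j-k)!}\big)+R_k(x,y)(v)$ satisfy $\|R_k(x,y)(v)\|\le M\|x-y\|^{\gamma-k}\|v\|$. Standard atlas on $\mathbb{R}^p$: let $(e_i)$ be the canonical basis, $I=\{\sum_{i=1}^p \frac{k_i}{\sqrt p}e_i:k_i\in\mathbb{Z}\}$, $\varphi:\mathbb{R}^p\to\mathbb{R}^p$ a Lip-$\gamma$ map equal to the identity on $B_p(0,1)$ with support in $B_p(0,2)$, and $\phi_x(y)=\varphi(y-x)$; the charts are $(B_p(x,1),\phi_x)_{x\in I}$. *)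

(* Defs.v *)
From HB Require Import structures.
From mathcomp Require Import all_boot all_order all_algebra.
From mathcomp Require Import all_classical all_reals all_analysis.
Set Implicit Arguments. Unset Strict Implicit. Unset Printing Implicit Defensive.
Import Order.TTheory GRing.Theory Num.Theory.
Import numFieldNormedType.Exports.
Local Open Scope classical_set_scope.
Local Open Scope ring_scope.

Section Defs.
Variables (R : realType) (p : nat).

Definition enorm (v : 'rV[R]_p) : R := Num.sqrt (\sum_(i < p) (v ord0 i) ^+ 2).

Definition eball (c : 'rV[R]_p) (r : R) : set 'rV[R]_p :=
  [set y | enorm (y - c) < r].

(* Iterated directional derivatives:
   dirder g [:: v1; ...; vk] x = D_{v1} ( ... (D_{vk} g) ... ) x
   = D^k g(x)(v1 ⊗ ... ⊗ vk) when g is k times differentiable. *)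
Fixpoint dirder (W : normedModType R) (g : 'rV[R]_p -> W) (vs : seq 'rV[R]_p)
  : 'rV[R]_p -> W :=
  match vs with
  | [::] => g
  | v :: vs' => fun x => derive (dirder g vs') x v
  end.

(* Lip-gamma (Stein sense) on the (open) set U with norm <= M.
   m is the integer with 0 < gamma - m <= 1.  The tensor v is taken to be an
   elementary tensor v1 ⊗ ... ⊗ vk with ||v|| = prod ||vi|| (projective norm). *)
Definition LipGamma (W : normedModType R) (gamma : R) (U : set 'rV[R]_p)
  (M : R) (g : 'rV[R]_p -> W) : Prop :=
  forall m : nat, 0 < gamma - m%:R <= 1 ->
  [/\
      (forall (vs : seq 'rV[R]_p) x, (size vs < m)%N -> U x ->
          differentiable (dirder g vs) x),
      (forall (vs : seq 'rV[R]_p) x, (size vs <= m)%N -> U x ->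
          `|dirder g vs x| <= M * \prod_(v <- vs) enorm v) &
      (forall (vs : seq 'rV[R]_p) x y, (size vs <= m)%N -> U x -> U y ->
          `|dirder g vs x
            - \sum_(size vs <= j < m.+1)
                (((j - size vs)`!)%:R^-1 *:
                   dirder g (vs ++ nseq (j - size vs) (x - y)) y)|
          <= M * (enorm (x - y)) `^ (gamma - (size vs)%:R)
               * \prod_(v <- vs) enorm v)].

Definition latticeI : set 'rV[R]_p :=
  [set x | exists k : 'I_p -> int,
      x = \row_(i < p) ((k i)%:~R / Num.sqrt (p%:R))].

Definition std_atlas_bump (gamma : R) (phi : 'rV[R]_p -> 'rV[R]_p) : Prop :=
  [/\ exists M, LipGamma gamma setT M phi,
      (forall y, eball 0 1 y -> phi y = y) &
      closure [set y | phi y != 0] `<=` eball 0 2].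

(* F-induced chart map at x: phi_x o F^{-1}, phi_x(y) = phi (y - x). *)
Definition Fchart (E : normedModType R) (Finv : E -> 'rV[R]_p)
  (phi : 'rV[R]_p -> 'rV[R]_p) (x : 'rV[R]_p) : E -> 'rV[R]_p :=
  fun u => phi (Finv u - x).

Definition is_chart_inverse (E : normedModType R) (F : 'rV[R]_p -> E)
  (psi : E -> 'rV[R]_p) (x : 'rV[R]_p) (g : 'rV[R]_p -> E) : Prop :=
  (forall z, eball 0 1 z -> (F @` eball x 1) (g z) /\ psi (g z) = z) /\
  (forall u, (F @` eball x 1) u -> eball 0 1 (psi u) /\ g (psi u) = u).

End Defs.

(* Main.v *)
Require Import Defs.
From HB Require Import structures.
From mathcomp Require Import all_boot all_order all_algebra.
From mathcomp Require Import all_classical all_reals all_analysis.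
Import Order.TTheory GRing.Theory Num.Theory.
Import numFieldNormedType.Exports.
Local Open Scope classical_set_scope.
Local Open Scope ring_scope.

Lemma dirder_shift (R : realType) (p : nat) (E : normedModType R)
  (F : 'rV[R]_p -> E) (x : 'rV[R]_p) vs :
  dirder (fun z => F (z + x)) vs = (fun z => dirder F vs (z + x)).
Proof.
elim: vs => [//|v vs IH] /=.
apply: funext => z; rewrite IH /derive /=.
apply: (congr1 (fun f => lim (f @ 0^'))); apply: funext => h /=; by rewrite addrA.
Qed.

Theorem mainTheorem6 (R : realType) (p : nat) (gamma : R)
  (E : normedModType R) (V : set E)
  (F : 'rV[R]_p -> E) (Finv : E -> 'rV[R]_p) (phi : 'rV[R]_p -> 'rV[R]_p) :
  (0 < p)%N -> 1 <= gamma ->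
  (* F : R^p -> V is a homeomorphism with inverse Finv *)
  F @` setT = V -> (forall y, Finv (F y) = y) ->
  continuous F -> {within V, continuous Finv} ->
  (* F is Lip-gamma *)
  (exists MF, LipGamma gamma setT MF F) ->
  (* phi is the std_atlas_bump function of the standard atlas *)
  std_atlas_bump gamma phi ->
  exists M : R, forall x, latticeI x ->
    exists g : 'rV[R]_p -> E,
      is_chart_inverse F (Fchart Finv phi x) x g /\
      LipGamma gamma (eball 0 1) M g.
Proof.
move=> _ _ _ FK _ _ [MF LF] [_ phiid _].
exists MF => x _; exists (fun z => F (z + x)); split.
  split.
    move=> z z1; split.
      exists (z + x) => //; by rewrite /eball /= addrK; move: z1; rewrite /eball /= subr0.
    by rewrite /Fchart FK addrK phiid.
  move=> u [y y1 <-]; rewrite /Fchart FK.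
  have h : eball 0 1 (y - x) by rewrite /eball /= subr0.
  by rewrite phiid // subrK.
move=> m hm; have [L1 L2 L3] := LF m hm; split.
- move=> vs z hs _; rewrite dirder_shift.
  apply: (@differentiable_comp _ _ _ _ (fun z => z + x) (dirder F vs)).
    apply: differentiableD; [exact: ex_diff | exact: differentiable_cst].
  exact: L1.
- by move=> vs z hs _; rewrite dirder_shift; apply: L2.
- move=> vs z y hs _ _; rewrite dirder_shift.
  under eq_big_nat => j _ do rewrite (@dirder_shift _ _ _ F x).
  have H := L3 vs (z + x) (y + x) hs I I.
  have E1 : z + x - (y + x) = z - y by rewrite opprD addrACA subrr addr0.
  rewrite E1 in H. by [].
Qed.
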